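(* Let $L\ge2$, $k\ge2$ be integers, $\kappa:\{1,\dots,k-1\}\times\mathbb{N}\to\{0,\dots,L-1\}$ a map, and let $(a(n))_{n=0}^\infty$ be an $(L,k,\kappa)$-TM sequence. Then $(a(n))_{n=0}^\infty$ is ultimately periodic if and only if there exists an integer $A\ge0$ such that $$\kappa(s,A+y)\equiv\kappa(1,A)\,s\,k^y\pmod L$$ for all $1\le s\le k-1$ and all $y\in\mathbb{N}$. Moreover, if $(a(n))_{n=0}^\infty$ is not ultimately periodic, then none of its equally spaced subsequences $(a(N+tl))_{t=0}^\infty$ ($N\ge0$, $l>0$) is ultimately periodic.
   Context: $\mathbb{N}$ is the set of non-negative integers. Let $a_0,\dots,a_{L-1}$ be pairwise distinct complex numbers and $f$ the map on $\{a_0,\dots,a_{L-1}\}$ with $f(a_i)=a_{i+1}$ (indices mod $L$), extended letterwise to finite words; $f^j$ is its $j$-fold iterate, $f^0$ the identity. Define $A_0=a_0$ and $A_{n+1}=A_n\,f^{\kappa(1,n)}(A_n)\cdots f^{\kappa(k-1,n)}(A_n)$ (concatenation); $A_n$ is a prefix of $A_{n+1}$ and the infinite word $\lim A_n$, indexed from $0$, is the $(L,k,\kappa)$-TM sequence. A sequence $(b(n))$ is ultimately periodic if there are $N\ge0$, $l>0$ with $b(n)=b(n+l)$ for all $n\ge N$. *)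

(* Defs.v *)
From mathcomp Require Import all_boot all_order all_algebra.
From mathcomp Require Import complex Rstruct.
From Stdlib Require Import Rdefinitions.

Set Implicit Arguments.
Unset Strict Implicit.
Unset Printing Implicit Defensive.

Definition CC : Type := complex R.

(* Letters a_0,...,a_{L-1} are represented by their indices i < L;
   f^j (a_i) = a_{(i+j) mod L}, extended letterwise to words. *)
Definition fpow (L j : nat) (w : seq nat) : seq nat :=
  map (fun i => (i + j) %% L) w.

Fixpoint TMword (L k : nat) (kappa : nat -> nat -> nat) (n : nat) : seq nat :=
  match n with
  | 0 => [:: 0]
  | n'.+1 =>
      let W := TMword L k kappa n' in
      W ++ flatten [seq fpow L (kappa s n') W | s <- iota 1 (k - 1)]
  end.

(* b is the infinite word lim A_n (with letters a_i), indexed from 0: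
   every A_n is a prefix of b. *)
Definition is_TM_sequence (L k : nat) (kappa : nat -> nat -> nat)
    (a : nat -> CC) (b : nat -> CC) : Prop :=
  forall n i, i < size (TMword L k kappa n) ->
    b i = a (nth 0 (TMword L k kappa n) i).

Definition ultimately_periodic (T : Type) (b : nat -> T) : Prop :=
  exists N l, 0 < l /\ forall n, N <= n -> b n = b (n + l).

(* Main.v *)
Require Import Defs.
From mathcomp Require Import all_boot all_order all_algebra.
From mathcomp Require Import zify ring.

Definition kap0 (kappa : nat -> nat -> nat) s J := if s == 0 then 0 else kappa s J.
Definition dig k j x := (x %/ k ^ j) %% k.
Definition SS (k : nat) kappa (J t x : nat) := \sum_(y < t) kap0 kappa (dig k y x) (J + y).

Lemma SS0 k kappa J x : SS k kappa J 0 x = 0.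
Proof. by rewrite /SS big_ord0. Qed.

Lemma SSS k kappa J t x :
  SS k kappa J t.+1 x = kap0 kappa (x %% k) J + SS k kappa J.+1 t (x %/ k).
Proof.
rewrite /SS big_ord_recl /dig expn0 divn1 addn0; congr (_ + _).
apply: eq_bigr => i _; rewrite /bump /= expnS divnMA addnS //.
Qed.

Lemma SS_zero k kappa J t : SS k kappa J t 0 = 0.
Proof. by rewrite /SS big1 // => i _; rewrite /dig div0n mod0n. Qed.

Lemma SS_ext k kappa J t t' x : 1 < k -> x < k ^ t ->
  SS k kappa J (t + t') x = SS k kappa J t x.
Proof.
move=> hk; elim: t J x => [|t IH] J x.
  rewrite expn0 ltnS leqn0 => /eqP ->; by rewrite SS_zero SS0.
move=> hx; rewrite addSn !SSS IH //.
by rewrite ltn_divLR ?(ltn_trans _ hk) // -expnSr.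
Qed.

Lemma SS_split k kappa J t t' u v : 1 < k -> u < k ^ t ->
  SS k kappa J (t + t') (u + v * k ^ t) = SS k kappa J t u + SS k kappa (J + t) t' v.
Proof.
move=> hk; have k0 : 0 < k by apply: ltn_trans hk.
elim: t J u => [|t IH] J u.
  rewrite expn0 ltnS leqn0 => /eqP ->; by rewrite SS0 muln1 add0n addn0.
move=> hu; rewrite addSn !SSS -addnA; congr (_ + _).
  by rewrite expnSr mulnA addnC modnMDl.
rewrite expnSr mulnA [u + _]addnC divnMDl // [v * _ + _]addnC IH ?addSnnS //.
by rewrite ltn_divLR // -expnSr.
Qed.

Lemma SS_one k kappa J t s : 0 < s < k -> SS k kappa J t.+1 s = kappa s J.
Proof.
move=> /andP[s0 sk]; rewrite SSS modn_small // divn_small // SS_zero addn0.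
by rewrite /kap0; case: s s0 {sk}.
Qed.

Definition cc k kappa x := SS k kappa 0 x x.

Lemma cc_eq k kappa x t : 1 < k -> x < k ^ t -> cc k kappa x = SS k kappa 0 t x.
Proof.
move=> hk hx; rewrite /cc -(SS_ext k kappa 0 x t x hk (ltn_expl x hk)) addnC.
by rewrite SS_ext.
Qed.

Lemma size_flatten_iota (F : nat -> seq nat) m st cnt :
  (forall s, size (F s) = m) ->
  size (flatten [seq F s | s <- iota st cnt]) = cnt * m.
Proof.
move=> hF; elim: cnt st => [|cnt IH] st //=.
by rewrite size_cat hF IH mulSn.
Qed.

Lemma nth_flatten_iota (F : nat -> seq nat) m st cnt q r :
  (forall s, size (F s) = m) -> q < cnt -> r < m ->
  nth 0 (flatten [seq F s | s <- iota st cnt]) (q * m + r) = nth 0 (F (st + q)) r.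
Proof.
move=> hF; elim: cnt st q => [|cnt IH] st q //= hq hr.
rewrite nth_cat hF; case: q hq => [|q] hq.
  by rewrite mul0n add0n hr addn0.
rewrite mulSn -addnA ltnNge leq_addr /= addKn IH // addSnnS //.
Qed.

Lemma TM_nth L k kappa n : 1 < k ->
  size (TMword L k kappa n) = k ^ n /\
  forall i, i < k ^ n -> nth 0 (TMword L k kappa n) i = SS k kappa 0 n i %% L.
Proof.
move=> hk; have k0 : 0 < k by apply: ltn_trans hk.
elim: n => [|n [Hs Hn]].
  split => // i; rewrite expn0 ltnS leqn0 => /eqP ->; by rewrite SS0 mod0n.
have hF : forall s, size (fpow L (kappa s n) (TMword L k kappa n)) = k ^ n.
  by move=> s; rewrite size_map Hs.
split.
  rewrite /= size_cat Hs (size_flatten_iota _ _ _ _ hF) expnS.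
  case: (k) hk => // k1 _; by rewrite subSS subn0 mulSn.
move=> i hi /=; rewrite nth_cat Hs.
case: ltnP => hik.
  by rewrite Hn // -addn1 SS_ext.
set j := i - k ^ n.
have kn0 : 0 < k ^ n by rewrite expn_gt0 k0.
have hq : j %/ k ^ n < k - 1.
  rewrite ltn_divLR // /j; move: hi; rewrite expnS; nia.
rewrite (divn_eq j (k ^ n)) (nth_flatten_iota _ _ _ _ _ _ hF hq) ?ltn_mod //.
rewrite /fpow (nth_map 0) ?Hs ?ltn_mod // Hn ?ltn_mod // modnDml.
have -> : i = j %% k ^ n + (j %/ k ^ n).+1 * k ^ n.
  move: (divn_eq j (k ^ n)); rewrite mulSn /j; lia.
rewrite -[n.+1]addn1 SS_split ?ltn_mod // add0n SS_one ?add1n //.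
apply/andP; split => //; lia.
Qed.

Lemma b_cc L k kappa (a b : nat -> CC) : 1 < k -> is_TM_sequence L k kappa a b ->
  forall i, b i = a (cc k kappa i %% L).
Proof.
move=> hk H i; have [Hs Hn] := TM_nth L k kappa i hk.
have hi : i < k ^ i by apply: ltn_expl.
by rewrite (H i i) ?Hs // Hn.
Qed.

Lemma lin k kappa L A : 1 < k ->
  (forall s y, 1 <= s <= k - 1 -> kappa s (A + y) = kappa 1 A * s * k ^ y %[mod L]) ->
  forall t y v, v < k ^ t -> SS k kappa (A + y) t v = kappa 1 A * k ^ y * v %[mod L].
Proof.
move=> hk H; have k0 : 0 < k by apply: ltn_trans hk.
elim => [|t IH] y v hv.
  by move: hv; rewrite expn0 ltnS leqn0 => /eqP ->; rewrite SS0 muln0.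
have hkap : kap0 kappa (v %% k) (A + y) = kappa 1 A * (v %% k) * k ^ y %[mod L].
  have hm := ltn_pmod v k0; rewrite /kap0; case: eqP => [->|h].
    by rewrite muln0 mul0n.
  apply: H; apply/andP; split; lia.
rewrite SSS -addnS -modnDm IH; last by rewrite ltn_divLR // -expnSr.
rewrite hkap modnDm; congr (_ %% _).
rewrite {3}(divn_eq v k) expnS; ring.
Qed.

Lemma small_bound u w K M : u < K -> w < M -> u + w * K < M * K.
Proof. move=> hu hw; apply: (leq_trans (n := K + w * K)); first by rewrite ltn_add2r. by rewrite -mulSn leq_mul2r hw orbT. Qed.

Lemma periodic_of_cond k kappa L A : 1 < k ->
  (forall s y, 1 <= s <= k - 1 -> kappa s (A + y) = kappa 1 A * s * k ^ y %[mod L]) ->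
  forall m, cc k kappa (m + L * k ^ A) = cc k kappa m %[mod L].
Proof.
move=> hk H m; have k0 : 0 < k by apply: ltn_trans hk.
have kA : 0 < k ^ A by rewrite expn_gt0 k0.
set u := m %% k ^ A; set v := m %/ k ^ A; set t := v + L.
have hu : u < k ^ A by rewrite ltn_mod.
have hw : forall w, w < k ^ t ->
    cc k kappa (u + w * k ^ A) = SS k kappa 0 A u + kappa 1 A * w %[mod L].
  move=> w hw; rewrite (cc_eq k kappa _ (A + t)) //; last first.
    by rewrite expnD [k ^ A * _]mulnC small_bound.
  have := lin k kappa L A hk H t 0 w hw; rewrite addn0 expn0 muln1 => hl.
  by rewrite SS_split // -modnDm add0n hl modnDm.
have -> : m = u + v * k ^ A by rewrite addnC -divn_eq.
have -> : u + v * k ^ A + L * k ^ A = u + (v + L) * k ^ A by ring.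
rewrite !hw.
- by rewrite mulnDr addnA -modnDmr modnMl addn0.
- apply: leq_ltn_trans (ltn_expl t hk); rewrite /t; lia.
- apply: ltn_expl hk.
Qed.

Lemma pigeon k P : 0 < P -> exists a0 b0, 0 < b0 /\ k ^ (a0 + b0) = k ^ a0 %[mod P].
Proof.
move=> P0; set s := [seq k ^ j %% P | j <- iota 0 P.+1].
have : ~~ uniq s.
  apply/negP => us.
  have hsub : {subset s <= iota 0 P}.
    by move=> x /mapP[j _ ->]; rewrite mem_iota add0n ltn_mod P0.
  by have := uniq_leq_size us hsub; rewrite size_map !size_iota ltnn.
move/(uniqPn 0) => [i [j [ij js eq]]].
rewrite size_map size_iota in js.
have hi : i < P.+1 by apply: ltn_trans ij js.
rewrite !(nth_map 0) ?size_iota // !nth_iota // !add0n in eq.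
exists i, (j - i); split; first by rewrite subn_gt0.
by rewrite subnKC ?(ltnW ij).
Qed.

Lemma pow_period k P a0 b0 : k ^ (a0 + b0) = k ^ a0 %[mod P] ->
  forall J i, a0 <= J -> k ^ (J + i * b0) = k ^ J %[mod P].
Proof.
move=> H.
have H1 : forall J, a0 <= J -> k ^ (J + b0) = k ^ J %[mod P].
  move=> J hJ; have -> : J + b0 = (J - a0) + (a0 + b0) by rewrite addnA subnK.
  by rewrite expnD -modnMmr H modnMmr -expnD subnK.
move=> J; elim => [|i IH] hJ; first by rewrite mul0n addn0.
rewrite mulSnr addnA H1 ?IH //; exact: leq_trans hJ (leq_addr _ _).
Qed.

Fixpoint Yf k b0 J s := if s is s'.+1 then Yf k b0 J s' + k ^ (J + s * b0) else 0.
Fixpoint Kf (kappa : nat -> nat -> nat) b0 J s :=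
  if s is s'.+1 then Kf kappa b0 J s' + kappa 1 (J + s * b0) else 0.

Lemma Y_props k kappa b0 J : 1 < k -> 0 < b0 -> forall s u, u < k ^ J ->
  u + Yf k b0 J s < k ^ (J + s * b0 + 1) /\
  SS k kappa 0 (J + s * b0 + 1) (u + Yf k b0 J s) = SS k kappa 0 J u + Kf kappa b0 J s.
Proof.
move=> hk b00; have k0 : 0 < k by apply: ltn_trans hk.
elim => [|s IH] u hu /=.
  rewrite mul0n !addn0 SS_ext //; split => //.
  by apply: leq_trans hu _; rewrite leq_pexp2l // addn1.
have [hb he] := IH u hu.
set t := J + s.+1 * b0.
have ht : J + s * b0 + 1 <= t by rewrite /t mulSnr addnA addn1 -{1}(addn0 (J + s * b0)) ltn_add2l.
have hb' : u + Yf k b0 J s < k ^ t by apply: leq_trans hb _; rewrite leq_pexp2l.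
split.
  rewrite addnA -[k ^ t]mul1n addn1 expnS; exact: (small_bound _ _ _ _ hb' hk).
rewrite addnA -[k ^ t]mul1n SS_split // add0n SS_one //.
have -> : t = J + s * b0 + 1 + (t - (J + s * b0 + 1)) by rewrite subnKC.
by rewrite SS_ext // subnKC // he addnA.
Qed.

Lemma Y_mod k b0 P J a0 : k ^ (a0 + b0) = k ^ a0 %[mod P] -> a0 <= J ->
  forall s, Yf k b0 J s = s * k ^ J %[mod P].
Proof.
move=> H hJ; elim => [|s IH] //=.
by rewrite -modnDm IH (pow_period _ _ _ _ H J s.+1 hJ) modnDm mulSnr.
Qed.

Lemma resid n0 l X : 0 < l -> (n0 + (l - X %% l) %% l + X) %% l = n0 %% l.
Proof.
move=> l0; rewrite -addnA -modnDmr modnDml.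
have -> : l - X %% l + X = X %/ l * l + l.
  have hr := ltn_pmod X l0; have hd := divn_eq X l; lia.
by rewrite modnMDl modnn addn0.
Qed.

Lemma key L k kappa (a b : nat -> CC) : 2 <= L -> 1 < k ->
  (forall i j, i < L -> j < L -> a i = a j -> i = j) ->
  is_TM_sequence L k kappa a b ->
  forall N l, 0 < l -> ultimately_periodic (fun t => b (N + t * l)) ->
  exists A, forall s y, 1 <= s <= k - 1 -> kappa s (A + y) = kappa 1 A * s * k ^ y %[mod L].
Proof.
move=> hL hk ainj HTM N l l0 [T [p [p0 Hp]]].
have k0 : 0 < k by apply: ltn_trans hk.
have L0 : 0 < L by apply: leq_trans hL.
have bc := b_cc L k kappa a b hk HTM.
have beq : forall x y, b x = b y -> cc k kappa x = cc k kappa y %[mod L].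
  by move=> x y; rewrite !bc => /ainj; apply; apply: ltn_pmod.
set n0 := N + T * l; set P := p * l.
have P0 : 0 < P by rewrite muln_gt0 p0.
have F1 : forall q t, b (N + (T + t + q * p) * l) = b (N + (T + t) * l).
  elim => [|q IH] t; first by rewrite mul0n addn0.
  by rewrite mulSnr addnA -Hp ?IH // -addnA leq_addr.
have F2 : forall x z, n0 <= x -> x <= z -> x %% l = n0 %% l -> x = z %[mod P] -> b x = b z.
  move=> x z hx hxz hxl hxz'.
  have /dvdnP [t ht] : l %| x - n0 by rewrite -eqn_mod_dvd // hxl.
  have /dvdnP [q hq] : P %| z - x by rewrite -eqn_mod_dvd // hxz'.
  have ex : x = N + (T + t) * l by rewrite mulnDl addnA -ht subnKC.
  have ez : z = N + (T + t + q * p) * l.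
    by rewrite -(subnKC hxz) hq {1}ex /P mulnA -addnA -mulnDl.
  by rewrite ez ex F1.
have F2' : forall x z, n0 <= x -> n0 <= z -> x %% l = n0 %% l -> x = z %[mod P] -> b x = b z.
  move=> x z hx hz hxl hxz; case: (leqP x z) => hc; first exact: F2.
  have hzl : z %% l = n0 %% l.
    have hlP : l %| P by apply: dvdn_mull.
    by rewrite -(modn_dvdm z hlP) -hxz modn_dvdm.
  symmetry; apply: (F2 z x) => //; try exact: ltnW; by rewrite hxz.
have [a0 [b0 [b00 Hab]]] := pigeon k P P0.
set A := a0 + (n0 + l).
have core : forall J X Z, A <= J -> X = Z %[mod P] ->
    exists2 u, u < k ^ J & cc k kappa (u + X) = cc k kappa (u + Z) %[mod L].
  move=> J X Z hJ hXZ.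
  set u := n0 + (l - X %% l) %% l.
  exists u.
    have h1 : u < n0 + l by rewrite ltn_add2l ltn_mod.
    apply: leq_trans (ltn_trans h1 (ltn_expl _ hk)) _.
    by rewrite leq_pexp2l // (leq_trans (leq_addl _ _) hJ).
  apply: beq; apply: F2'.
  - by rewrite /u -addnA leq_addr.
  - by rewrite /u -addnA leq_addr.
  - exact: resid.
  - by apply/eqP; rewrite eqn_modDl; apply/eqP.
have R1 : forall J s, A <= J -> 0 < s < k -> kappa s J = Kf kappa b0 J s %[mod L].
  move=> J s hJ /andP[s0 sk].
  have ha0 : a0 <= J by apply: leq_trans (leq_addr _ _) hJ.
  have [u hu hc] := core J (s * k ^ J) (Yf k b0 J s) hJ (esym (Y_mod k b0 P J a0 Hab ha0 s)).
  have [hb he] := Y_props k kappa b0 J hk b00 s u hu.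
  have c1 : cc k kappa (u + s * k ^ J) = SS k kappa 0 J u + kappa s J.
    rewrite (cc_eq k kappa _ (J + 1) hk); last first.
      by rewrite addn1 expnS; exact: (small_bound _ _ _ _ hu sk).
    by rewrite SS_split // add0n SS_one ?s0.
  have c2 : cc k kappa (u + Yf k b0 J s) = SS k kappa 0 J u + Kf kappa b0 J s.
    by rewrite (cc_eq k kappa _ _ hk hb) he.
  by move: hc; rewrite c1 c2 => /eqP; rewrite eqn_modDl => /eqP.
have R2 : forall J, A <= J -> kappa 1 J.+1 = Kf kappa b0 J k %[mod L].
  move=> J hJ.
  have ha0 : a0 <= J by apply: leq_trans (leq_addr _ _) hJ.
  have hm : k ^ J.+1 = Yf k b0 J k %[mod P] by rewrite (Y_mod k b0 P J a0 Hab ha0 k) expnS.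
  have [u hu hc] := core J (k ^ J.+1) (Yf k b0 J k) hJ hm.
  have [hb he] := Y_props k kappa b0 J hk b00 k u hu.
  have hu' : u < k ^ J.+1 by apply: leq_trans hu _; rewrite leq_pexp2l.
  have c1 : cc k kappa (u + k ^ J.+1) = SS k kappa 0 J u + kappa 1 J.+1.
    rewrite (cc_eq k kappa _ (J.+1 + 1) hk); last first.
      by rewrite addn1 (expnS k J.+1); have := small_bound _ 1 _ _ hu' hk; rewrite mul1n.
    rewrite -{1}[k ^ J.+1]mul1n SS_split // add0n (SS_one k kappa J.+1 0 1 hk).
    by rewrite -addn1 SS_ext.
  have c2 : cc k kappa (u + Yf k b0 J k) = SS k kappa 0 J u + Kf kappa b0 J k.
    by rewrite (cc_eq k kappa _ _ hk hb) he.
  by move: hc; rewrite c1 c2 => /eqP; rewrite eqn_modDl => /eqP.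
have R3 : forall J i, A <= J -> kappa 1 (J + i * b0) = kappa 1 J %[mod L].
  move=> J; elim=> [|i IH] hJ; first by rewrite mul0n addn0.
  have hJ' : A <= J + i * b0 by apply: leq_trans hJ (leq_addr _ _).
  have := R1 _ 1 hJ' hk; rewrite /= add0n mul1n => h.
  by rewrite mulSnr addnA -h IH.
have R4 : forall J s, A <= J -> Kf kappa b0 J s = s * kappa 1 J %[mod L].
  move=> J; elim=> [|s IH] hJ //=.
  by rewrite -modnDm IH // R3 // modnDm mulSnr.
exists A.
have K1 : forall y, kappa 1 (A + y) = kappa 1 A * k ^ y %[mod L].
  elim=> [|y IH]; first by rewrite addn0 expn0 muln1.
  rewrite addnS (R2 _ (leq_addr y A)) (R4 _ _ (leq_addr y A)) -modnMmr IH modnMmr expnS.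
  congr (_ %% _); ring.
move=> s y /andP[s1 sk].
have sk' : s < k.
  by apply: leq_ltn_trans sk _; rewrite subn1 ltn_predL; exact: ltnW hk.
have hs : 0 < s < k by rewrite s1 sk'.
rewrite (R1 _ _ (leq_addr y A) hs) (R4 _ _ (leq_addr y A)) -modnMmr K1 modnMmr.
congr (_ %% _); ring.
Qed.

Theorem theorem3p1 (L k : nat) (kappa : nat -> nat -> nat)
    (a : nat -> CC) (b : nat -> CC) :
  2 <= L -> 2 <= k ->
  (forall s n, 1 <= s <= k - 1 -> kappa s n < L) ->
  (forall i j, i < L -> j < L -> a i = a j -> i = j) ->
  is_TM_sequence L k kappa a b ->
  (ultimately_periodic b <->
     exists A : nat, forall s y, 1 <= s <= k - 1 ->
       kappa s (A + y) = kappa 1 A * s * k ^ y %[mod L])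
  /\
  (~ ultimately_periodic b ->
     forall N l, 0 < l -> ~ ultimately_periodic (fun t => b (N + t * l))).
Proof.
move=> hL hk hkL ainj HTM.
have L0 : 0 < L by apply: leq_trans hL.
have cond_per : (exists A : nat, forall s y, 1 <= s <= k - 1 ->
       kappa s (A + y) = kappa 1 A * s * k ^ y %[mod L]) -> ultimately_periodic b.
  move=> [A H]; exists 0, (L * k ^ A); split.
    by rewrite muln_gt0 expn_gt0 L0 (ltn_trans _ hk).
  move=> n _; rewrite !(b_cc L k kappa a b hk HTM).
  by rewrite (periodic_of_cond k kappa L A hk H n).
split; first split.
- move=> [N [l [l0 H]]]; apply: (key L k kappa a b hL hk ainj HTM 0 1) => //.
  exists N, l; split => // n hn; rewrite !add0n !muln1; exact: H.
- exact: cond_per.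
- move=> np N l l0 up; apply: np; apply: cond_per.
  exact: (key L k kappa a b hL hk ainj HTM N l l0 up).
Qed.
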